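(* For every deterministic KAT automaton $A$ over $(\Sigma,T)$, there exist $k>0$ and maps $\mathfrak{s},\mathfrak{t}$ (with $\mathfrak{t}:T_k\to\mathsf{BA}(T)$ and $\mathfrak{s}$ assigning to each $p\in\Sigma_k$ a deterministic KAT automaton over $(\Sigma,T)$) such that $L(A)=L(\mathsf{compose}^{\mathfrak{s}}_{\mathfrak{t}}(A_k))$, where $A_k$ is the free automaton with $k$ states, and for all $p\in\Sigma_k$, $L(\mathfrak{s}(p))=L(p')$ for some $p'\in\Sigma$.
   Context: Atoms $\mathsf{At}_T=2^T$ for a finite test set $T$; $\mathsf{BA}(T)$ are Boolean expressions over $T$; $\alpha\le b$ means $b$ holds under the assignment making exactly the tests in $\alpha$ true. Guarded strings: words in $\mathsf{At}_T(\Sigma\mathsf{At}_T)^*$. For a primitive action $p$, $L(p)=\{\alpha p\beta:\alpha,\beta\in\mathsf{At}_T\}$. A deterministic KAT automaton over $(\Sigma,T)$ is $A=(Q,\delta,\iota)$ with $Q$ finite, $\delta:Q\times\mathsf{At}_T\to\{\mathsf{accept},\mathsf{reject}\}+\Sigma\times Q$, $\iota:\mathsf{At}_T\to\{\mathsf{accept},\mathsf{reject}\}+\Sigma\times Q$. For $\gamma:\mathsf{At}_T\to\{\mathsf{accept},\mathsf{reject}\}+\Sigma\times Q$, $L_A(\gamma)$ is the smallest set such that $\gamma(\alpha)=\mathsf{accept}$ implies $\alpha\in L_A(\gamma)$, and $\gamma(\alpha)=(p,q)$, $w\in L_A(\delta(q,-))$ imply $\alpha pw\in L_A(\gamma)$.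 $L(A)=L_A(\iota)$. Composition. (1) For $\mathfrak{t}:T_0\to\mathsf{BA}(T_1)$ and $A=(Q,\delta,\iota)$ over $(\Sigma,T_0)$: for $\beta\in\mathsf{At}_{T_1}$ let $\mathfrak{t}^{-1}(\beta)\in\mathsf{At}_{T_0}$ be the atom with $t\in\mathfrak{t}^{-1}(\beta)$ iff $\beta\le\mathfrak{t}(t)$; $\mathsf{compose}_{\mathfrak{t}}(A)=(Q,\delta',\iota')$ over $(\Sigma,T_1)$ with $\delta'(q,\beta)=\delta(q,\mathfrak{t}^{-1}(\beta))$, $\iota'(\beta)=\iota(\mathfrak{t}^{-1}(\beta))$. (2) For $A=(Q,\delta,\iota)$ over $(\Sigma_0,T)$ and $\mathfrak{s}$ assigning to each $p\in\Sigma_0$ an automaton $\mathfrak{s}(p)=(Q_p,\delta_p,\iota_p)$ over $(\Sigma_1,T)$: define $\hat\delta(q,\alpha)$ by: $\mathsf{accept}$ if $\delta(q,\alpha)=\mathsf{accept}$; $(p,q')$ if $\delta(q,\alpha)=(p,q')$ and $\iota_p(\alpha)\ne\mathsf{accept}$; $\hat\delta(q',\alpha)$ if $\delta(q,\alpha)=(p,q')$ and $\iota_p(\alpha)=\mathsf{accept}$; $\mathsf{reject}$ otherwise (including when this recursion never terminates). Define $\hat\iota(\alpha)=\hat\delta(q,\alpha)$ if $\iota(\alpha)=(p,q)$ and $\iota_p(\alpha)=\mathsf{accept}$, and $\hat\iota(\alpha)=\iota(\alpha)$ otherwise. Then $\mathsf{compose}^{\mathfrak{s}}(A)=(Q',\delta',\iota')$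 over $(\Sigma_1,T)$ with $Q'=\sum_{p\in\Sigma_0}Q_p\times Q$ (disjoint union), and for $q_p\in Q_p$, $q\in Q$: $\delta'((q_p,q),\alpha)=(p'',(q_p',q))$ if $\delta_p(q_p,\alpha)=(p'',q_p')$; $=(p'',(q_{p'},q'))$ if $\delta_p(q_p,\alpha)=\mathsf{accept}$, $\hat\delta(q,\alpha)=(p',q')$ and $\iota_{p'}(\alpha)=(p'',q_{p'})$; $=\mathsf{accept}$ if $\delta_p(q_p,\alpha)=\mathsf{accept}$ and $\hat\delta(q,\alpha)=\mathsf{accept}$; $=\mathsf{reject}$ otherwise. $\iota'(\alpha)=\mathsf{accept}$ if $\hat\iota(\alpha)=\mathsf{accept}$; $=(p'',(q_{p'},q))$ if $\hat\iota(\alpha)=(p',q)$ and $\iota_{p'}(\alpha)=(p'',q_{p'})$; $=\mathsf{reject}$ otherwise. (3) $\mathsf{compose}^{\mathfrak{s}}_{\mathfrak{t}}(A)=\mathsf{compose}^{\mathfrak{s}}(\mathsf{compose}_{\mathfrak{t}}(A))$. Free automaton with $k$ states: $A_k=(Q,\delta,\iota)$ over actions $\Sigma_k=\{p_1,\dots,p_k\}$ and tests $T_k=\{t_{i,j}:0\le i,j\le k\}$, $Q=\{q_1,\dots,q_k\}$. For $0\le i,j\le k$ let $b_{i,j}\in\mathsf{BA}(T_k)$ be the test that holds when $t_{i,j}$ is true and $t_{i,m}$ is false for all $m<j$ (so for fixed $i$ the $b_{i,j}$ are mutually exclusive). Then $\delta(q_i,\alpha)=\mathsf{accept}$ if $\alpha\le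 b_{i,0}$, $=(p_j,q_j)$ if $\alpha\le b_{i,j}$ ($1\le j\le k$), $=\mathsf{reject}$ otherwise; $\iota(\alpha)=\mathsf{accept}$ if $\alpha\le b_{0,0}$, $=(p_j,q_j)$ if $\alpha\le b_{0,j}$ ($1\le j\le k$), $=\mathsf{reject}$ otherwise. *)

(* Defs.v *)
From mathcomp Require Import all_boot.
From Stdlib Require Import ClassicalEpsilon.

Set Implicit Arguments.
Unset Strict Implicit.
Unset Printing Implicit Defensive.

Inductive bexp (T : Type) : Type :=
| BVar of T
| BTrue
| BFalse
| BNot of bexp T
| BAnd of bexp T & bexp T
| BOr of bexp T & bexp T.

Arguments BTrue {T}.
Arguments BFalse {T}.

(* An atom is the set of tests that are true. *)
Definition atom (T : finType) := {set T}.

Fixpoint bholds (T : finType) (alpha : atom T) (b : bexp T) : bool :=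
  match b with
  | BVar t => t \in alpha
  | BTrue => true
  | BFalse => false
  | BNot b1 => ~~ bholds alpha b1
  | BAnd b1 b2 => bholds alpha b1 && bholds alpha b2
  | BOr b1 b2 => bholds alpha b1 || bholds alpha b2
  end.

(* alpha0 p1 alpha1 ... pn alphan  is represented as (alpha0, [:: (p1,alpha1); ...; (pn,alphan)]) *)
Definition gstring (Sigma : Type) (T : finType) := (atom T * seq (Sigma * atom T))%type.

Definition language (Sigma : Type) (T : finType) := gstring Sigma T -> Prop.

Definition lang_eq (Sigma : Type) (T : finType) (L1 L2 : language Sigma T) : Prop :=
  forall w, L1 w <-> L2 w.

Definition Lprim (Sigma : Type) (T : finType) (p : Sigma) : language Sigma T :=
  fun w => exists alpha beta, w = (alpha, [:: (p, beta)]).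

Inductive out (Sigma Q : Type) : Type :=
| Acc
| Rej
| Step of Sigma & Q.

Arguments Acc {Sigma Q}.
Arguments Rej {Sigma Q}.

Record dkat (Sigma : Type) (T : finType) : Type := DKat {
  st : finType;
  dl : st -> atom T -> out Sigma st;
  io : atom T -> out Sigma st
}.

Arguments st {Sigma T} d.
Arguments dl {Sigma T} d _ _.
Arguments io {Sigma T} d _.

Inductive LA (Sigma : Type) (T : finType) (A : dkat Sigma T) :
    (atom T -> out Sigma (st A)) -> gstring Sigma T -> Prop :=
| LA_acc (gamma : atom T -> out Sigma (st A)) alpha :
    gamma alpha = Acc -> @LA Sigma T A gamma (alpha, [::])
| LA_step (gamma : atom T -> out Sigma (st A)) alpha p q beta w :
    gamma alpha = Step p q -> @LA Sigma T A (dl A q) (beta, w) ->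
    @LA Sigma T A gamma (alpha, (p, beta) :: w).

Definition L (Sigma : Type) (T : finType) (A : dkat Sigma T) : language Sigma T :=
  @LA Sigma T A (io A).

Section ComposeT.
Variables (Sigma : Type) (T0 T1 : finType).
Variable (tt : T0 -> bexp T1).

Definition tinv (beta : atom T1) : atom T0 := [set t | bholds beta (tt t)].

Definition compose_t (A : dkat Sigma T0) : dkat Sigma T1 :=
  @DKat Sigma T1 (st A) (fun q beta => dl A q (tinv beta)) (fun beta => io A (tinv beta)).

End ComposeT.

Section ComposeS.
Variables (Sigma0 : finType) (Sigma1 : Type) (T : finType).
Variable (A : dkat Sigma0 T).
Variable (s : Sigma0 -> dkat Sigma1 T).

(* hat_rel q alpha r : the recursion defining hat-delta(q,alpha) terminates with value r *)
Inductive hat_rel : st A -> atom T -> out Sigma0 (st A) -> Prop :=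
| hat_acc q alpha : dl A q alpha = Acc -> hat_rel q alpha Acc
| hat_rej q alpha : dl A q alpha = Rej -> hat_rel q alpha Rej
| hat_stop q alpha p q' :
    dl A q alpha = Step p q' -> io (s p) alpha <> Acc -> hat_rel q alpha (Step p q')
| hat_skip q alpha p q' r :
    dl A q alpha = Step p q' -> io (s p) alpha = Acc -> hat_rel q' alpha r ->
    hat_rel q alpha r.

(* hat-delta(q,alpha): the result of the recursion, or reject if it never terminates *)
Definition hat_delta (q : st A) (alpha : atom T) : out Sigma0 (st A) :=
  match excluded_middle_informative (exists r, hat_rel q alpha r) with
  | left H => proj1_sig (constructive_indefinite_description _ H)
  | right _ => Rej
  end.

Definition hat_iota (alpha : atom T) : out Sigma0 (st A) :=
  match io A alpha with
  | Step p q =>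
      match io (s p) alpha with
      | Acc => hat_delta q alpha
      | _ => io A alpha
      end
  | _ => io A alpha
  end.

Definition cstate : finType := {p : Sigma0 & (st (s p) * st A)%type}.

Definition mkc (p : Sigma0) (qp : st (s p)) (q : st A) : cstate :=
  existT (fun p => (st (s p) * st A)%type) p (qp, q).

Definition cdelta (x : cstate) (alpha : atom T) : out Sigma1 cstate :=
  match x with
  | existT p (qp, q) =>
      match dl (s p) qp alpha with
      | Step p'' qp' => Step p'' (@mkc p qp' q)
      | Acc =>
          match hat_delta q alpha with
          | Acc => Acc
          | Step p' q' =>
              match io (s p') alpha with
              | Step p'' qp' => Step p'' (@mkc p' qp' q')
              | _ => Rej
              end
          | Rej => Rej
          end
      | Rej => Rej
      end
  end.

Definition ciota (alpha : atom T) : out Sigma1 cstate :=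
  match hat_iota alpha with
  | Acc => Acc
  | Step p' q =>
      match io (s p') alpha with
      | Step p'' qp => Step p'' (@mkc p' qp q)
      | _ => Rej
      end
  | Rej => Rej
  end.

Definition compose_s : dkat Sigma1 T := @DKat Sigma1 T cstate cdelta ciota.

End ComposeS.

Definition compose_st (Sigma0 : finType) (Sigma1 : Type) (T0 T1 : finType)
  (s : Sigma0 -> dkat Sigma1 T1) (tt : T0 -> bexp T1) (A : dkat Sigma0 T0) : dkat Sigma1 T1 :=
  compose_s (compose_t tt A) s.

(* Actions Sigma_k = {p_1..p_k} are encoded as 'I_k (p_j ~ j-1);
   states Q = {q_1..q_k} as 'I_k (q_i ~ i-1);
   tests T_k = {t_{i,j} : 0 <= i,j <= k} as 'I_k.+1 * 'I_k.+1 (t_{i,j} ~ (i,j)). *)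

Section Free.
Variable k : nat.

Definition free_tests : finType := ('I_k.+1 * 'I_k.+1)%type.

Definition bij (i j : 'I_k.+1) : bexp free_tests :=
  BAnd (BVar (i, j))
       (foldr (fun (m : 'I_k.+1) b => BAnd (BNot (BVar (i, m))) b) BTrue
              (filter (fun m : 'I_k.+1 => (m < j)%N) (enum 'I_k.+1))).

(* the transition out of row i: accept if alpha <= b_{i,0},
   (p_j, q_j) if alpha <= b_{i,j} (1 <= j <= k), reject otherwise *)
Definition free_row (i : 'I_k.+1) (alpha : atom free_tests) : out 'I_k 'I_k :=
  match [pick j : 'I_k.+1 | bholds alpha (bij i j)] with
  | Some j =>
      match unlift ord0 j with
      | None => Acc
      | Some j' => Step j' j'
      end
  | None => Rej
  end.

Definition free_aut : dkat 'I_k free_tests :=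
  @DKat 'I_k free_tests 'I_k (fun q alpha => free_row (lift ord0 q) alpha) (free_row ord0).

End Free.

(* Main.v *)
Require Import Defs.
From mathcomp Require Import all_boot.
From Stdlib Require Import ClassicalEpsilon.
Set Implicit Arguments. Unset Strict Implicit.

Definition mo (Sigma : Type) (Q1 Q2 : Type) (R : Q1 -> Q2 -> Prop)
  (o1 : out Sigma Q1) (o2 : out Sigma Q2) : Prop :=
  match o1, o2 with
  | Acc, Acc => True
  | Rej, Rej => True
  | Step a q, Step b x => a = b /\ R q x
  | _, _ => False
  end.

Lemma bisim (Sigma : Type) (T : finType) (A B : dkat Sigma T) (R : st A -> st B -> Prop) :
  (forall q x al, R q x -> mo R (dl A q al) (dl B x al)) ->
  forall w al g1 g2, (forall al, mo R (g1 al) (g2 al)) ->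
  (LA g1 (al, w) <-> LA g2 (al, w)).
Proof.
move=> HR; elim=> [|[p be] w IH] al g1 g2 Hg.
- split=> H; inversion H; subst; apply: LA_acc; move: (Hg al).
  + by rewrite H2; case: (g2 al).
  + by rewrite H2; case: (g1 al).
- split=> H; inversion H; subst.
  + move: (Hg al); rewrite H3; case E: (g2 al) => [| |b x] //= [? Hq]; subst.
    apply: LA_step; first exact: E.
    by rewrite -(IH be (dl A q) (dl B x)) //; move=> al'; apply: HR.
  + move: (Hg al); rewrite H3; case E: (g1 al) => [| |b x] //= [? Hq]; subst.
    apply: LA_step; first exact: E.
    by rewrite (IH be (dl A x) (dl B q)) //; move=> al'; apply: HR.
Qed.

Lemma hat_delta_noskip (Sigma0 : finType) (Sigma1 : Type) (T : finType)
  (A : dkat Sigma0 T) (s : Sigma0 -> dkat Sigma1 T) :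
  (forall p al, io (s p) al <> Acc) -> forall q al, hat_delta s q al = dl A q al.
Proof.
move=> Hs q al; rewrite /hat_delta.
case: excluded_middle_informative => [H|H].
- case: constructive_indefinite_description => r /= Hr.
  inversion Hr; subst => //; exfalso; exact: (Hs p al).
- exfalso; apply: H; exists (dl A q al).
  case E: (dl A q al) => [| |p q'].
  + exact: hat_acc. + exact: hat_rej.
  + by apply: hat_stop; [exact: E| apply: Hs].
Qed.

Lemma hat_iota_noskip (Sigma0 : finType) (Sigma1 : Type) (T : finType)
  (A : dkat Sigma0 T) (s : Sigma0 -> dkat Sigma1 T) :
  (forall p al, exists b x, io (s p) al = Step b x) -> forall al, @hat_iota _ _ _ A s al = io A al.
Proof.
move=> Hs al; rewrite /hat_iota.
case E: (io A al) => [| |p q] //.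
by have [b [x ->]] := Hs p al.
Qed.

Definition single (Sigma : Type) (T : finType) (a : Sigma) : dkat Sigma T :=
  @DKat Sigma T unit (fun _ _ => Acc) (fun _ => Step a tt).

Lemma single_L (Sigma : Type) (T : finType) (a : Sigma) :
  lang_eq (L (single T a)) (@Lprim Sigma T a).
Proof.
move=> [al w]; split.
- move=> H; inversion H as [g a1 E|g a1 p q be w' E H']; subst; first by [].
  case: E => ->. inversion H' as [|g2 a2 p2 q2 b2 w2 E2]; subst; last by []. by exists al, be.
- move=> [al' [be [-> ->]]]. apply: LA_step => //. exact: LA_acc.
Qed.

Definition charf (T : finType) (al : atom T) : bexp T :=
  foldr (fun t b => BAnd (if t \in al then BVar t else BNot (BVar t)) b) BTrue (enum T).

Lemma charfP (T : finType) (al be : atom T) : bholds be (charf al) = (be == al).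
Proof.
have H : forall s : seq T, bholds be (foldr (fun t b => BAnd (if t \in al then BVar t else BNot (BVar t)) b) BTrue s) = all (fun t => bholds be (BVar t) == bholds al (BVar t)) s.
  elim=> //= t s ->; case: ifP => Ha /=; by case: (in_mem t _).
rewrite /charf H; apply/allP/eqP.
- by move=> Ha; apply/setP=> t; move: (Ha t); rewrite mem_enum /= => /(_ isT) /eqP.
- by move=> -> t _.
Qed.

Definition disjf (T : finType) (s : seq (atom T)) : bexp T :=
  foldr (fun al b => BOr (charf al) b) BFalse s.

Lemma disjfP (T : finType) (s : seq (atom T)) be : bholds be (disjf s) = (be \in s).
Proof. by elim: s => //= a s ->; rewrite charfP in_cons. Qed.

Section Constr.
Variables (Sigma : Type) (T : finType) (A : dkat Sigma T) (a0 : Sigma).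

Local Notation J := (option (st A) * atom T)%type.
Definition kk := #|{: J}|.
Definition dec (j : 'I_kk) : J := enum_val j.
Definition enc (x : J) : 'I_kk := enum_rank x.
Lemma decK x : dec (enc x) = x. Proof. exact: enum_rankK. Qed.

Definition out_of (j : J) : out Sigma (st A) :=
  match j.1 with Some q => dl A q j.2 | None => io A j.2 end.
Definition act (j : J) : Sigma := match out_of j with Step a _ => a | _ => a0 end.
Definition target (j : J) : option (st A) :=
  match out_of j with Step _ q => Some q | _ => None end.

Definition srcA (i : 'I_kk.+1) : option (st A) :=
  match unlift ord0 i with None => None | Some j => target (dec j) end.
Definition orow (i : 'I_kk.+1) (al : atom T) : out Sigma (st A) :=
  match unlift ord0 i with
  | None => io A al
  | Some j => match target (dec j) with Some q => dl A q al | None => Rej end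
  end.
Definition desired (i : 'I_kk.+1) (al : atom T) : option 'I_kk.+1 :=
  match orow i al with
  | Acc => Some ord0
  | Rej => None
  | Step _ _ => Some (lift ord0 (enc (srcA i, al)))
  end.

Definition ttc (ij : free_tests kk) : bexp T :=
  disjf [seq al <- enum {: atom T} | desired ij.1 al == Some ij.2].

Definition sc (p : 'I_kk) : dkat Sigma T := single T (act (dec p)).

Lemma tinvP al i j : ((i, j) \in tinv ttc al) = (desired i al == Some j).
Proof. by rewrite inE /ttc disjfP mem_filter mem_enum andbT. Qed.

Lemma bholds_fold (be : atom (free_tests kk)) i (s : seq 'I_kk.+1) :
  bholds be (foldr (fun (m : 'I_kk.+1) b => BAnd (BNot (BVar (i, m))) b) BTrue s)
  = all (fun m => (i, m) \notin be) s.
Proof. by elim: s => //= m s ->. Qed.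

Lemma free_rowP i al :
  free_row i (tinv ttc al) =
  match orow i al with
  | Acc => Acc | Rej => Rej
  | Step _ _ => Step (enc (srcA i, al)) (enc (srcA i, al))
  end.
Proof.
have Hb : forall j, bholds (tinv ttc al) (bij i j) =
   (desired i al == Some j) && all (fun m => desired i al != Some m) [seq m : 'I_kk.+1 <- enum 'I_kk.+1 | (m < j)%N].
  move=> j; rewrite /bij /= bholds_fold tinvP; congr (_ && _).
  by apply: eq_all => m; rewrite tinvP.
rewrite /free_row; case: pickP => [j Hj|H].
- move: Hj; rewrite Hb => /andP [/eqP Hd _].
  move: Hd; rewrite /desired; case: (orow i al) => [| |a q] //.
  + by case=> E; subst j; rewrite unlift_none.
  + by case=> E; subst j; rewrite liftK.
- have : forall j, desired i al != Some j.
    move=> j; apply/negP => /eqP Hd; move: (H j); rewrite Hb Hd eqxx /=.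
    move/negP; apply; apply/allP => m; rewrite mem_filter => /andP [Hm _].
    by apply/eqP => [[E]]; move: Hm; rewrite E ltnn.
  rewrite /desired; case: (orow i al) => [| |a q] //.
  + by move/(_ ord0); rewrite eqxx.
  + by move/(_ (lift ord0 (enc (srcA i, al)))); rewrite eqxx.
Qed.

Lemma orow_step i al a q : orow i al = Step a q ->
  act (dec (enc (srcA i, al))) = a /\ target (dec (enc (srcA i, al))) = Some q.
Proof.
rewrite decK /act /target /srcA /orow /out_of /=.
case: (unlift ord0 i) => [j|] /=.
- case: (target (dec j)) => [q0|] //= ->; done.
- by move=> ->.
Qed.

End Constr.
Unset Implicit Arguments. Set Strict Implicit.

Theorem proposition7p2 (Sigma : Type) (T : finType) (A : dkat Sigma T) :
  inhabited Sigma ->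
  exists k : nat, 0 < k /\
    exists (s : 'I_k -> dkat Sigma T) (tt : free_tests k -> bexp T),
      lang_eq (L A) (L (compose_st s tt (free_aut k))) /\
      (forall p : 'I_k, exists p' : Sigma, lang_eq (L (s p)) (@Lprim Sigma T p')).
Proof.
case=> a0.
exists (kk A); split.
  by apply/card_gt0P; exists (None, set0).
exists (@sc _ _ A a0), (@ttc _ _ A); split; last first.
  by move=> p; exists (@act _ _ A a0 (dec p)); exact: single_L.
set B := compose_st _ _ _.
have Hio : forall p al, io (@sc _ _ A a0 p) al <> Acc by [].
have Hio2 : forall p al, exists b x, io (@sc _ _ A a0 p) al = Step b x.
  by move=> p al; do 2 eexists.
pose R (q : st A) (x : st B) := target (dec (projT2 x).2) = Some q.
move=> [al w].
apply: (@bisim _ _ A B R).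
- move=> q [p [u j]] be /= Hq.
  rewrite /= hat_delta_noskip //= free_rowP.
  have Ho : orow (A:=A) (lift ord0 j) be = dl A q be.
    by rewrite /orow liftK /= Hq.
  move: (@orow_step _ _ A a0 (lift ord0 j) be); rewrite Ho.
  case: (dl A q be) => [| |a q'] //= /(_ a q' erefl) [-> E].
  by split.
- move=> be /=; rewrite /ciota hat_iota_noskip //= free_rowP.
  have Ho : orow (A:=A) ord0 be = io A be by rewrite /orow unlift_none.
  move: (@orow_step _ _ A a0 ord0 be); rewrite Ho.
  case: (io A be) => [| |a q'] //= /(_ a q' erefl) [-> E].
  by split.
Qed.
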